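(* Fix a test policy $\pi$ and initial condition $\xi\in\mathcal X$, and suppose there is $L_\pi\ge0$ with $\|\bar\pi(x)-\bar\pi(y)\|\le L_\pi\|x-y\|$ for all $x,y$ and $\bar\pi\in\{\pi,\pi_\star\}$. Let $f^{cl}_{\pi_\star}$ be $\eta$-locally $\delta$-ISS for some $\eta>0$, and assume its gain $\gamma$ satisfies $\gamma(x)\le O(x^{1+r})$ as $x\to0^+$ for some $r>0$. Choose constants $\mu,\alpha>0$ such that \[2L_\pi x+(x/\mu)^{1/(1+r)}\le\gamma^{-1}(x)\quad\text{for all }0\le x\le\alpha.\] If \[\max_{0\le t\le T-1}\mu\|\Delta_t^{\pi_\star}(\xi;\pi)\|^{1+r}\le\alpha\quad\text{and}\quad\max_{0\le t\le T-1}\Big(2L_\pi\mu\|\Delta_t^{\pi_\star}(\xi;\pi)\|^{1+r}+\|\Delta_t^{\pi_\star}(\xi;\pi)\|\Big)\le\eta,\] then for all $1\le t\le T$, \[\|x_t^{\pi_\star}(\xi)-x_t^\pi(\xi)\|\le\max_{0\le k\le t-1}\mu\|\Delta_k^{\pi_\star}(\xi;\pi)\|^{1+r}.\]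
   Context: Dynamics $x_{t+1}=f(x_t,u_t)$, $x_0=\xi$, $x_t\in\mathbb R^d,u_t\in\mathbb R^m$. For a policy $\pi$, perturbed closed loop $x_{t+1}=f^{cl}_\pi(x_t,\Delta_t):=f(x_t,\pi(x_t)+\Delta_t)$, states $x_t^\pi(\xi,\{\Delta_s\})$, $x_t^\pi(\xi):=x_t^\pi(\xi,\{0\})$. Initial conditions lie in a compact set $\mathcal X$. Norms: Euclidean for vectors, operator norm for matrices/tensors. Class $\mathcal K$: continuous, strictly increasing, vanishing at $0$; class $\mathcal{KL}$: $\beta(\cdot,t)$ class $\mathcal K$ for each $t$, $\beta(s,\cdot)$ decreasing. $f^{cl}_\pi$ is $\eta$-locally $\delta$-ISS if there are class $\mathcal{KL}$ $\beta$ and class $\mathcal K$ $\gamma$ with $\|x_t^\pi(\xi_1;\{\Delta_s\}_{s=0}^{t-1})-x_t^\pi(\xi_2;\{0\})\|\le\beta(\|\xi_1-\xi_2\|,t)+\gamma(\max_{0\le k\le t-1}\|\Delta_k\|)$ for all $\xi_1,\xi_2\in\mathcal X$, $t\in\mathbb N$, and perturbations with $\sup_t\|\Delta_t\|\le\eta$. $\gamma^{-1}$ is the inverse of $\gamma$ on its range (with $\gamma^{-1}(x)=+\infty$ for $x\ge\sup\gamma$). $\pi_\star$ is the expert policy; the discrepancy on the expert trajectory is $\Delta_t^{\pi_\star}(\xi;\pi):=\pi(x_t^{\pi_\star}(\xi))-\pi_\star(x_t^{\pi_\star}(\xi))$. *)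

(* Defs.v *)
From HB Require Import structures.
From mathcomp Require Import all_boot all_order all_algebra.
From mathcomp Require Import all_classical all_reals all_analysis.
Set Implicit Arguments. Unset Strict Implicit. Unset Printing Implicit Defensive.
Import Order.TTheory GRing.Theory Num.Theory.
Import numFieldNormedType.Exports.
Local Open Scope classical_set_scope.
Local Open Scope ring_scope.

Section Defs.
Variable R : realType.

Definition enorm (n : nat) (v : 'cV[R]_n) : R :=
  Num.sqrt (\sum_(i < n) (v i 0) ^+ 2).

Fixpoint traj (d m : nat) (f : 'cV[R]_d -> 'cV[R]_m -> 'cV[R]_d)
  (pi : 'cV[R]_d -> 'cV[R]_m) (xi : 'cV[R]_d) (Delta : nat -> 'cV[R]_m)
  (t : nat) : 'cV[R]_d :=
  match t with
  | O => xi
  | S t' => let x := traj f pi xi Delta t' in f x (pi x + Delta t')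
  end.

Definition traj0 (d m : nat) (f : 'cV[R]_d -> 'cV[R]_m -> 'cV[R]_d)
  (pi : 'cV[R]_d -> 'cV[R]_m) (xi : 'cV[R]_d) (t : nat) : 'cV[R]_d :=
  traj f pi xi (fun _ => 0) t.

Definition classK (g : R -> R) : Prop :=
  {within [set x : R | 0 <= x], continuous g} /\
  (forall x y, 0 <= x -> x < y -> g x < g y) /\
  g 0 = 0.

Definition classKL (b : R -> nat -> R) : Prop :=
  (forall t, classK (fun s => b s t)) /\
  (forall s, 0 <= s -> forall t1 t2 : nat, (t1 <= t2)%N -> b s t2 <= b s t1).

Definition locally_dISS_with (d m : nat) (f : 'cV[R]_d -> 'cV[R]_m -> 'cV[R]_d)
  (pi : 'cV[R]_d -> 'cV[R]_m) (X : set 'cV[R]_d) (eta : R)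
  (beta : R -> nat -> R) (gamma : R -> R) : Prop :=
  classKL beta /\ classK gamma /\
  forall xi1 xi2, X xi1 -> X xi2 ->
  forall Delta : nat -> 'cV[R]_m, (forall s, enorm (Delta s) <= eta) ->
  forall t : nat,
    enorm (traj f pi xi1 Delta t - traj0 f pi xi2 t)
      <= beta (enorm (xi1 - xi2)) t
         + gamma (\big[Num.max/0]_(k < t) enorm (Delta k)).

Definition locally_dISS (d m : nat) (f : 'cV[R]_d -> 'cV[R]_m -> 'cV[R]_d)
  (pi : 'cV[R]_d -> 'cV[R]_m) (X : set 'cV[R]_d) (eta : R) : Prop :=
  exists beta gamma, locally_dISS_with f pi X eta beta gamma.

(* Inverse of gamma on its range (over [0,+oo)), +oo outside the range. *)
Definition ginv (g : R -> R) (x : R) : \bar R :=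
  match pselect (exists y : R, 0 <= y /\ g y = x) with
  | left H => (proj1_sig (cid H))%:E
  | right _ => +oo%E
  end.

Definition discr (d m : nat) (f : 'cV[R]_d -> 'cV[R]_m -> 'cV[R]_d)
  (pistar pi : 'cV[R]_d -> 'cV[R]_m) (xi : 'cV[R]_d) (t : nat) : 'cV[R]_m :=
  pi (traj0 f pistar xi t) - pistar (traj0 f pistar xi t).

End Defs.

(* Main.v *)
Require Import Defs.
From HB Require Import structures.
From mathcomp Require Import all_boot all_order all_algebra.
From mathcomp Require Import all_classical all_reals all_analysis.
From mathcomp Require Import ring lra.
Import Order.TTheory GRing.Theory Num.Theory.
Import numFieldNormedType.Exports.
Local Open Scope classical_set_scope.
Local Open Scope ring_scope.

Section H.
Variable R : realType.

Lemma cs_sum n (a b : 'I_n -> R) :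
  (\sum_i a i * b i) ^+ 2 <= (\sum_i a i ^+ 2) * (\sum_i b i ^+ 2).
Proof.
have H0 : 0 <= \sum_i \sum_j (a i * b j - a j * b i) ^+ 2.
  by apply: sumr_ge0 => i _; apply: sumr_ge0 => j _; exact: sqr_ge0.
have E : \sum_i \sum_j (a i * b j - a j * b i) ^+ 2 =
   2 * ((\sum_i a i ^+ 2) * (\sum_i b i ^+ 2)) - 2 * ((\sum_i a i * b i) ^+ 2).
  transitivity (\sum_i (a i ^+ 2 * (\sum_j b j ^+ 2) + (\sum_j a j ^+ 2) * b i ^+ 2
      - 2 * (a i * b i) * (\sum_j a j * b j))).
    apply: eq_bigr => i _.
    rewrite mulr_sumr mulr_suml mulr_sumr -big_split -sumrB /=.
    apply: eq_bigr => j _; ring.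
  rewrite sumrB big_split /= -mulr_suml -mulr_sumr -mulr_suml.
  rewrite -mulr_sumr; ring.
lra.
Qed.

Lemma enorm_ge0 n (v : 'cV[R]_n) : 0 <= enorm v.
Proof. exact: sqrtr_ge0. Qed.

Lemma enorm0 n : enorm (0 : 'cV[R]_n) = 0.
Proof. rewrite /enorm big1 ?sqrtr0 // => i _; by rewrite mxE expr0n. Qed.

Lemma enormN n (v : 'cV[R]_n) : enorm (- v) = enorm v.
Proof. rewrite /enorm; congr Num.sqrt; apply: eq_bigr => i _; by rewrite mxE sqrrN. Qed.

Lemma enormD n (u v : 'cV[R]_n) : enorm (u + v) <= enorm u + enorm v.
Proof.
rewrite /enorm.
set Su := \sum_i u i 0 ^+ 2; set Sv := \sum_i v i 0 ^+ 2.
have hu : 0 <= Su by apply: sumr_ge0 => i _; exact: sqr_ge0.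
have hv : 0 <= Sv by apply: sumr_ge0 => i _; exact: sqr_ge0.
have E : \sum_i (u + v) i 0 ^+ 2 = Su + Sv + 2 * (\sum_i u i 0 * v i 0).
  rewrite /Su /Sv mulr_sumr -!big_split /=.
  by apply: eq_bigr => i _; rewrite mxE; ring.
have cs := @cs_sum _ (fun i => u i 0) (fun i => v i 0).
have h1 : \sum_i u i 0 * v i 0 <= Num.sqrt Su * Num.sqrt Sv.
  rewrite -sqrtrM //.
  apply: le_trans (ler_norm _) _.
  by rewrite -sqrtr_sqr ler_sqrt ?mulr_ge0.
rewrite E -[X in _ <= X]ger0_norm ?addr_ge0 ?sqrtr_ge0 //.
rewrite -sqrtr_sqr ler_sqrt ?sqr_ge0 //.
rewrite sqrrD !sqr_sqrtr //.
lra.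
Qed.


Lemma sub3 (V : zmodType) (a b c d : V) : a - d = (a - b) + (b - c) + (c - d).
Proof. by rewrite !addrA !subrK. Qed.

Lemma bm_ge0 t (c : nat -> R) : 0 <= \big[Num.max/0]_(k < t) c k.
Proof. elim/big_rec: _ => // i y _ hy; by rewrite le_max hy orbT. Qed.

Lemma bm_le t (c : nat -> R) k : (k < t)%N -> c k <= \big[Num.max/0]_(k < t) c k.
Proof. move=> hk; exact: (le_bigmax 0 (fun i : 'I_t => c i) (Ordinal hk)). Qed.

Lemma bm_lub t (c : nat -> R) x : 0 <= x -> (forall k, (k < t)%N -> c k <= x) ->
  \big[Num.max/0]_(k < t) c k <= x.
Proof. move=> h0 h; apply: bigmax_le => // i _; exact: h. Qed.

Lemma bm_mono s t (c : nat -> R) : (s <= t)%N ->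
  \big[Num.max/0]_(k < s) c k <= \big[Num.max/0]_(k < t) c k.
Proof.
move=> hst; apply: bm_lub; first exact: bm_ge0.
move=> k hk; apply: bm_le; exact: leq_trans hk hst.
Qed.

Lemma bm_att t (c : nat -> R) : (0 < t)%N -> (forall k, 0 <= c k) ->
  exists2 j, (j < t)%N & \big[Num.max/0]_(k < t) c k = c j.
Proof.
case: t => // t _ hc.
have [i0 _ ->] := eq_bigmax (x := 0) (ord0 : 'I_t.+1) predT (fun i : 'I_t.+1 => c i) isT (fun i _ => hc i).
by exists i0.
Qed.

Lemma pw_mono (p x y : R) : 0 <= p -> 0 <= x -> x <= y -> x `^ p <= y `^ p.
Proof.
move=> hp hx hxy; apply: (ge0_ler_powR hp) => //; rewrite nnegrE //.
exact: le_trans hxy.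
Qed.

End H.
Arguments bm_le {R t} c {k}.
Arguments bm_lub {R t c x}.
Arguments bm_mono {R s t} c.
Arguments bm_att {R t} c.
Arguments pw_mono {R p x y}.
Arguments enormD {R n}.
Arguments enorm0 {R n}.
Arguments enormN {R n}.
Arguments enorm_ge0 {R n}.
Arguments sub3 {V}.

Theorem theorem1 (R : realType) (d m : nat)
  (f : 'cV[R]_d -> 'cV[R]_m -> 'cV[R]_d)
  (pistar pi : 'cV[R]_d -> 'cV[R]_m)
  (X : set 'cV[R]_d) (hX : compact X)
  (xi : 'cV[R]_d) (hxi : X xi)
  (Lpi : R) (hL0 : 0 <= Lpi)
  (hLpi : forall x y, enorm (pi x - pi y) <= Lpi * enorm (x - y))
  (hLstar : forall x y, enorm (pistar x - pistar y) <= Lpi * enorm (x - y))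
  (eta : R) (heta : 0 < eta)
  (beta : R -> nat -> R) (gamma : R -> R)
  (hISS : locally_dISS_with f pistar X eta beta gamma)
  (r : R) (hr : 0 < r)
  (hgO : exists C : R, exists c : R, 0 < c /\
           forall x, 0 < x -> x < c -> gamma x <= C * x `^ (1 + r))
  (mu alpha : R) (hmu : 0 < mu) (halpha : 0 < alpha)
  (hma : forall x, 0 <= x -> x <= alpha ->
     ((2 * Lpi * x + (x / mu) `^ (1 / (1 + r)))%:E <= ginv gamma x)%E)
  (T : nat)
  (h1 : \big[Num.max/0]_(t < T)
          (mu * enorm (discr f pistar pi xi t) `^ (1 + r)) <= alpha)
  (h2 : \big[Num.max/0]_(t < T)
          (2 * Lpi * mu * enorm (discr f pistar pi xi t) `^ (1 + r)
           + enorm (discr f pistar pi xi t)) <= eta) :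
  forall t : nat, (1 <= t <= T)%N ->
    enorm (traj0 f pistar xi t - traj0 f pi xi t)
      <= \big[Num.max/0]_(k < t)
           (mu * enorm (discr f pistar pi xi k) `^ (1 + r)).
Proof.
have [hKL [hK hiss]] := hISS.
set a := fun k => enorm (discr f pistar pi xi k).
set M := fun t => \big[Num.max/0]_(k < t) (mu * a k `^ (1 + r)).
set xs := fun k => traj0 f pistar xi k.
set xp := fun k => traj0 f pi xi k.
have ha0 : forall k, 0 <= a k by move=> k; exact: enorm_ge0.
have hr1 : 0 <= 1 + r by lra.
have hpw : forall x y, 0 <= x -> x <= y -> x `^ (1 + r) <= y `^ (1 + r).
  by move=> x y; exact: pw_mono.
have hM0 : forall t, 0 <= M t by move=> t; exact: (@bm_ge0 R t (fun k => mu * a k `^ (1 + r))).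
have hz0g : forall t (c : nat -> R), 0 <= \big[Num.max/0]_(k < t) c k by move=> t c; exact: bm_ge0.
have hMk : forall k t, (k < t)%N -> mu * a k `^ (1 + r) <= M t.
  by move=> k t hk; exact: (bm_le (fun k => mu * a k `^ (1 + r)) hk).
have hterm : forall k, (k < T)%N -> 2 * Lpi * mu * a k `^ (1 + r) + a k <= eta.
  move=> k hk; apply: le_trans h2.
  exact: (bm_le (fun k => 2 * Lpi * mu * a k `^ (1 + r) + a k) hk).
suff main : forall t, (t <= T)%N -> enorm (xs t - xp t) <= M t.
  by move=> t /andP[_ ht]; exact: main.
elim/ltn_ind => t IH ht.
pose D' := fun s => if (s < t)%N then pi (xp s) - pistar (xp s) else 0.
have htraj : forall s, (s <= t)%N -> traj f pistar xi D' s = xp s.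
  elim=> [|s IHs] hs //=.
  rewrite IHs ?(ltnW hs) // /D' hs /xp /traj0 /= addr0.
  by rewrite addrC subrK.
have hD' : forall k, (k < t)%N -> enorm (D' k) <= 2 * Lpi * M k + a k.
  move=> k hk; rewrite /D' hk.
  rewrite (sub3 _ (pi (xs k)) (pistar (xs k))).
  have e1 := IH k hk (leq_trans (ltnW hk) ht).
  apply: le_trans (enormD _ _) _.
  have h3 : enorm (pistar (xs k) - pistar (xp k)) <= Lpi * M k.
    apply: le_trans (hLstar _ _) _.
    exact: ler_wpM2l.
  have h4 : enorm (pi (xp k) - pi (xs k)) <= Lpi * M k.
    apply: le_trans (hLpi _ _) _.
    rewrite -opprB enormN; exact: ler_wpM2l.
  have h5 := enormD (pi (xp k) - pi (xs k)) (pi (xs k) - pistar (xs k)).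
  rewrite -/(discr f pistar pi xi k) -/(a k) in h5 *.
  lra.
have heta_k : forall k, (k < t)%N -> 2 * Lpi * M k + a k <= eta.
  move=> k hk; have hkT : (k < T)%N := leq_trans hk ht.
  have ht' := hterm k hkT.
  case: k hk hkT ht' => [|k] hk hkT ht'.
    rewrite /M big_ord0 mulr0 add0r; apply: le_trans ht'.
    rewrite lerDr mulr_ge0 ?mulr_ge0 ?powR_ge0 //; exact: ltW.
  have [j hj hMe] := bm_att (fun k => mu * a k `^ (1 + r)) (ltn0Sn k)
      (fun k => mulr_ge0 (ltW hmu) (powR_ge0 _ _)).
  rewrite /M hMe /=.
  have hjT : (j < T)%N := ltn_trans hj hkT.
  case: (leP (a j) (a k.+1)) => hjk.
    apply: le_trans ht'; rewrite lerD2r !mulrA; apply: ler_wpM2l.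
      by rewrite mulr_ge0 ?mulr_ge0 //; exact: ltW.
    exact: hpw.
  apply: le_trans (hterm j hjT); rewrite !mulrA; apply: lerD => //; exact: ltW.
have hDall : forall s, enorm (D' s) <= eta.
  move=> s; case hs: (s < t)%N.
    apply: le_trans (hD' s hs) _; exact: heta_k.
  by rewrite /D' hs enorm0; exact: ltW.
have hI := hiss xi xi hxi hxi D' hDall t.
rewrite htraj // subrr enorm0 (proj2 (proj2 (hKL.1 t))) add0r in hI.
rewrite -opprB enormN; apply: le_trans hI _.
set z := \big[Num.max/0]_(k < t) enorm (D' k).
have hz0 : 0 <= z by rewrite /z; apply: (hz0g t (fun k => enorm (D' k))).
have hMt : M t <= alpha by apply: le_trans h1; exact: (bm_mono (fun k => mu * a k `^ (1 + r)) ht).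
have hzB : z <= 2 * Lpi * M t + (M t / mu) `^ (1 / (1 + r)).
  rewrite /z; apply: (@bm_lub R t (fun k => enorm (D' k))).
    by rewrite addr_ge0 ?powR_ge0 // mulr_ge0 ?hM0 //; lra.
  move=> k hk; apply: le_trans (hD' k hk) _.
  have hMkt : M k <= M t by exact: (bm_mono (fun k => mu * a k `^ (1 + r)) (ltnW hk)).
  have : a k <= (M t / mu) `^ (1 / (1 + r)).
    have -> : a k = (mu * a k `^ (1 + r) / mu) `^ (1 / (1 + r)).
      rewrite [X in X / mu]mulrC mulfK; last by apply: lt0r_neq0.
      have hne : 1 + r != 0 by rewrite gt_eqF //; lra.
      by rewrite -powRrM mul1r mulfV ?powRr1.
    apply: pw_mono.
    - by rewrite divr_ge0 //; lra.
    - by rewrite divr_ge0 ?mulr_ge0 ?powR_ge0 //; exact: ltW.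
    - by rewrite ler_pM2r ?invr_gt0 //; exact: hMk.
  have : 2 * Lpi * M k <= 2 * Lpi * M t.
    by rewrite ler_wpM2l // mulr_ge0 //; lra.
  lra.
have hg := hma (M t) (hM0 t) hMt.
have [_ [hKinc hK0]] := hK.
rewrite /ginv in hg; move: hg.
case: pselect => [H|H].
  case: (cid H) => y [hy0 hy] /= hg.
  rewrite lee_fin in hg.
  have hzy : z <= y by apply: le_trans hzB hg.
  rewrite -hy; move: hzy; rewrite le_eqVlt => /orP[/eqP -> //| hlt].
    by apply: ltW; exact: hKinc.
move=> _.
rewrite leNgt; apply/negP => hlt.
apply: H.
have hg0 : gamma 0 <= gamma z by rewrite hK0; apply: le_trans (ltW hlt); exact: hM0.
have [c hc hgc] : exists2 c : R, c \in `[0, z] & gamma c = M t.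
  apply: IVT => //.
    apply: continuous_subspaceW hK.1.
    move=> x; rewrite /= in_itv /= => /andP[] //.
  rewrite min_l // max_r // hK0 hM0 /=; exact: ltW.
exists c; split => //.
by move: hc; rewrite in_itv /= => /andP[].
Qed.
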